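(* Let $\mathcal{D}=(\mathcal{P},\mathcal{L})$ be a $(G,2)$-point-transitive linear space, and let $\overline{\mathcal{D}}$ be its complement. Let $(\sigma,L)$ be an antiflag of $\mathcal{D}$ (so $\sigma\in\mathcal{P}\setminus L$, $L\in\mathcal{L}$) such that $\Omega=(\sigma,\mathcal{P}\setminus L)^G$ is a feasible $G$-orbit on the set of flags of $\overline{\mathcal{D}}$, and let $\Psi=((\sigma,\mathcal{P}\setminus L),(\tau,\mathcal{P}\setminus N))^G$ be a self-paired $G$-orbit on $\mathcal{C}(\overline{\mathcal{D}},\Omega)$. Then the $G$-flag graph $\Gamma=\Gamma(\overline{\mathcal{D}},\Omega,\Psi)$ has order $|\mathcal{P}|\cdot|L^{G_\sigma}|$ and valency $(|\mathcal{P}|-|L|-1)\cdot|N^{G_{\sigma,\tau,L}}|$. Moreover, there are exactly $|L^{G_{\sigma,\tau}}|$ vertices in $\Omega(\sigma)$ that have neighbours in $\Omega(\tau)$, and each of them has exactly $|N^{G_{\sigma,\tau,L}}|$ neighbours in $\Omega(\tau)$.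
   Context: All groups are finite. A linear space is an incidence structure of points and lines (lines identified with point sets) in which each line has at least two points and any two points lie on exactly one line; it is $(G,2)$-point-transitive if $G$ acts as automorphisms, 2-transitively on points. The complement $\overline{\mathcal{D}}$ has point set $\mathcal{P}$ and blocks $\mathcal{P}\setminus L$, $L\in\mathcal{L}$. A flag of a design is a pair (point, block containing it); an antiflag is a pair (point, block not containing it). For a $G$-orbit $\Omega$ on flags and a point $\sigma$, $\Omega(\sigma)$ is the set of flags in $\Omega$ with point-entry $\sigma$. $\Omega$ is feasible if $|\Omega(\sigma)|\ge2$ for some (hence all) point $\sigma$ and, for some (hence all) flag $(\sigma,M)\in\Omega$, $G_{\sigma,M}$ (setwise stabilizer of $M$ in $G_\sigma$) is transitive on $M\setminus\{\sigma\}$. $\mathcal{C}(\overline{\mathcal{D}},\Omega)=\{((\sigma,M),(\tau,M'))\in\Omega\times\Omega:\sigma\ne\tau,\ \sigma,\tau\in M\cap M'\}$. A $G$-orbit $\Psi$ on it is self-paired if $((\sigma,M),(\tau,M'))\in\Psi$ implies $((\tau,M'),(\sigma,M))\in\Psi$. The $G$-flag graph $\Gamma(\overline{\mathcal{D}},\Omega,\Psi)$ has vertex set $\Omega$, with two flags adjacent iff the ordered pair lies in $\Psi$. $G_{\sigma,\tau}=G_\sigma\cap G_\tau$, and $G_{\sigma,\tau,L}$ is the setwise stabilizer of $L$ in $G_{\sigma,\tau}$; $X^K$ denotes the orbit of $X$ under $K$. *)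

(* Defs.v *)
From mathcomp Require Import all_boot all_fingroup.
Set Implicit Arguments. Unset Strict Implicit. Unset Printing Implicit Defensive.

(* Points are the elements of a finite type T; lines are subsets of T;
   G is a group of permutations of the points. *)
Section Defs.
Variable T : finType.

Definition simage (g : {perm T}) (A : {set T}) : {set T} := [set g x | x in A].

Definition is_linear_space (Ls : {set {set T}}) : Prop :=
  (forall L, L \in Ls -> 2 <= #|L|) /\
  (forall x y, x != y -> exists! L, L \in Ls /\ x \in L /\ y \in L).

Definition acts_as_automorphisms (G : {set {perm T}}) (Ls : {set {set T}}) : Prop :=
  forall g L, g \in G -> L \in Ls -> simage g L \in Ls.

Definition two_transitive (G : {set {perm T}}) : Prop :=
  forall x y x' y', x != y -> x' != y' ->
    exists2 g, g \in G & g x = x' /\ g y = y'.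

Definition G2_point_transitive (G : {set {perm T}}) (Ls : {set {set T}}) : Prop :=
  [/\ is_linear_space Ls, acts_as_automorphisms G Ls & two_transitive G].

(* flags (point, block) ; blocks of the complement are ~: L *)
Definition flag := (T * {set T})%type.

Definition flag_act (g : {perm T}) (f : flag) : flag := (g f.1, simage g f.2).

Definition flag_orbit (G : {set {perm T}}) (f : flag) : {set flag} :=
  [set flag_act g f | g in G].

Definition Omega_at (Om : {set flag}) (s : T) : {set flag} :=
  [set f in Om | f.1 == s].

Definition pstab (H : {set {perm T}}) (s : T) : {set {perm T}} :=
  [set g in H | g s == s].
Definition setstab (H : {set {perm T}}) (A : {set T}) : {set {perm T}} :=
  [set g in H | simage g A == A].

Definition set_orbit (H : {set {perm T}}) (A : {set T}) : {set {set T}} :=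
  [set simage g A | g in H].

Definition feasible (G : {set {perm T}}) (Om : {set flag}) : Prop :=
  (exists s, 2 <= #|Omega_at Om s|) /\
  (exists f, f \in Om /\
     forall x y, x \in f.2 :\ f.1 -> y \in f.2 :\ f.1 ->
       exists2 g, g \in setstab (pstab G f.1) f.2 & g x = y).

Definition Cset (Om : {set flag}) : {set flag * flag} :=
  [set p : flag * flag | [&& p.1 \in Om, p.2 \in Om, p.1.1 != p.2.1,
                             p.1.1 \in p.1.2 :&: p.2.2 & p.2.1 \in p.1.2 :&: p.2.2]].

Definition pair_act (g : {perm T}) (p : flag * flag) : flag * flag :=
  (flag_act g p.1, flag_act g p.2).

Definition pair_orbit (G : {set {perm T}}) (p : flag * flag) : {set flag * flag} :=
  [set pair_act g p | g in G].

Definition self_paired (Psi : {set flag * flag}) : Prop :=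
  forall p, p \in Psi -> (p.2, p.1) \in Psi.

Definition nbhd (Om : {set flag}) (Psi : {set flag * flag}) (v : flag) : {set flag} :=
  [set w in Om | (v, w) \in Psi].

End Defs.

(* Main.v *)
Require Import Defs.
From mathcomp Require Import all_boot all_fingroup.
From mathcomp Require Import zify.
Set Implicit Arguments. Unset Strict Implicit. Unset Printing Implicit Defensive.

Section H.
Variable T : finType.
Implicit Types (g h : {perm T}) (A : {set T}) (f : flag T).

Lemma mem_simage g A x : (x \in simage g A) = (g^-1%g x \in A).
Proof.
apply/imsetP/idP => [[y yA ->]|H]; first by rewrite permK.
by exists (g^-1%g x); rewrite ?permKV.
Qed.

Lemma simage_mem g A x : (g x \in simage g A) = (x \in A).
Proof. by rewrite mem_simage permK. Qed.

Lemma simageM g h A : simage (g * h)%g A = simage h (simage g A).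
Proof. by apply/setP => x; rewrite !mem_simage invMg permM. Qed.

Lemma simageK g A : simage g^-1%g (simage g A) = A.
Proof. by apply/setP => x; rewrite !mem_simage invgK permK. Qed.

Lemma simageKV g A : simage g (simage g^-1%g A) = A.
Proof. by apply/setP => x; rewrite !mem_simage invgK permKV. Qed.

Lemma simageC g A : simage g (~: A) = ~: simage g A.
Proof. by apply/setP => x; rewrite !inE !mem_simage inE. Qed.

Lemma flag_actM g h f : flag_act (g * h)%g f = flag_act h (flag_act g f).
Proof. by rewrite /flag_act /= permM simageM. Qed.

Lemma flag_actK g f : flag_act g^-1%g (flag_act g f) = f.
Proof. by case: f => x A; rewrite /flag_act /= permK simageK. Qed.

Lemma flag_actKV g f : flag_act g (flag_act g^-1%g f) = f.
Proof. by case: f => x A; rewrite /flag_act /= permKV simageKV. Qed.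

Lemma flag_act_inj g : injective (flag_act g).
Proof. exact: can_inj (flag_actK g). Qed.

Variable G : {group {perm T}}.

Lemma orbit_act f0 h f : h \in G -> f \in flag_orbit G f0 -> flag_act h f \in flag_orbit G f0.
Proof.
move=> hG /imsetP[g gG ->]; apply/imsetP; exists (g * h)%g; first exact: groupM.
by rewrite flag_actM.
Qed.

Lemma porbit_act p0 h f1 f2 : h \in G -> (f1, f2) \in pair_orbit G p0 ->
  (flag_act h f1, flag_act h f2) \in pair_orbit G p0.
Proof.
move=> hG /imsetP[g gG [-> ->]]; apply/imsetP; exists (g * h)%g; first exact: groupM.
by rewrite /pair_act !flag_actM.
Qed.

Lemma Omega_at_act f0 h y : h \in G ->
  Omega_at (flag_orbit G f0) (h y) = flag_act h @: Omega_at (flag_orbit G f0) y.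
Proof.
move=> hG; apply/setP => w; rewrite !inE; apply/andP/imsetP.
- case=> wO /eqP w1; exists (flag_act h^-1%g w); last by rewrite flag_actKV.
  rewrite inE orbit_act ?groupV //= w1 permK eqxx //.
- case=> u; rewrite inE => /andP[uO /eqP u1] ->; split; first exact: orbit_act.
  by rewrite /= u1.
Qed.

Lemma nbhd_act f0 p0 h v : h \in G ->
  nbhd (flag_orbit G f0) (pair_orbit G p0) (flag_act h v)
  = flag_act h @: nbhd (flag_orbit G f0) (pair_orbit G p0) v.
Proof.
move=> hG; apply/setP => w; rewrite !inE; apply/andP/imsetP.
- case=> wO P; exists (flag_act h^-1%g w); last by rewrite flag_actKV.
  rewrite inE orbit_act ?groupV //=.
  by have := porbit_act (groupVr hG) P; rewrite flag_actK.
- case=> u; rewrite inE => /andP[uO P] ->; split; first exact: orbit_act.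
  exact: porbit_act.
Qed.

End H.
Lemma card_by_fst (A B : finType) (S : {set A * B}) (X : {set A}) c :
  (forall p, p \in S -> p.1 \in X) ->
  (forall x, x \in X -> #|[set p in S | p.1 == x]| = c) -> #|S| = #|X| * c.
Proof.
move=> HS Hf.
rewrite -sum1_card (partition_big (fun p => p.1) (mem X)) //=.
rewrite -sum_nat_const; apply: eq_bigr => x xX.
by rewrite -(Hf x xX) sum1_card; apply: eq_card => p; rewrite !inE.
Qed.

Theorem lemma2p3 (T : finType) (G : {group {perm T}}) (Ls : {set {set T}})
    (s t : T) (L N : {set T}) :
  G2_point_transitive G Ls ->
  L \in Ls -> s \notin L ->
  feasible G (flag_orbit G (s, ~: L)) ->
  N \in Ls ->
  ((s, ~: L), (t, ~: N)) \in Cset (flag_orbit G (s, ~: L)) ->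
  self_paired (pair_orbit G ((s, ~: L), (t, ~: N))) ->
  let Om := flag_orbit G (s, ~: L) in
  let Psi := pair_orbit G ((s, ~: L), (t, ~: N)) in
  [/\ #|Om| = #|T| * #|set_orbit (pstab G s) L|,
      forall v, v \in Om ->
        #|nbhd Om Psi v|
          = (#|T| - #|L| - 1) * #|set_orbit (setstab (pstab (pstab G s) t) L) N|,
      #|[set v in Omega_at Om s | [exists w in Omega_at Om t, (v, w) \in Psi]]|
          = #|set_orbit (pstab (pstab G s) t) L|
    & forall v, v \in Omega_at Om s ->
        [exists w in Omega_at Om t, (v, w) \in Psi] ->
        #|nbhd Om Psi v :&: Omega_at Om t|
          = #|set_orbit (setstab (pstab (pstab G s) t) L) N| ].
Proof.
move=> [_ _ G2] LLs sL [_ [f0 [f0O f0tr]]] NLs Cp _ Om Psi.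
rewrite inE in Cp; case/and5P: Cp => _ tO /= st sLN tLN.
set v0 : flag T := (s, ~: L).
have injs : forall (u : T), injective (fun X : {set T} => (u, ~: X)).
  by move=> u X Y [] /setC_inj.
have inj2 : forall h : {perm T}, {in [set: flag T] & [set: flag T], injective (flag_act h)}.
  by move=> h; apply: in2W; apply: flag_act_inj.
have EA : Omega_at Om s = (fun X => (s, ~: X)) @: set_orbit (pstab G s) L.
  apply/setP => w; rewrite inE; apply/andP/imsetP.
  - case=> /imsetP[g gG ->] /= /eqP gs; exists (simage g L).
      by apply/imsetP; exists g => //; rewrite inE gG gs eqxx.
    by rewrite /flag_act /= gs simageC.
  - case=> X /imsetP[g]; rewrite inE => /andP[gG /eqP gs] -> ->; split => //.
    by apply/imsetP; exists g => //; rewrite /flag_act /= gs simageC.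
have EB : [set v in Omega_at Om s | [exists w in Omega_at Om t, (v, w) \in Psi]]
    = (fun X => (s, ~: X)) @: set_orbit (pstab (pstab G s) t) L.
  apply/setP => v; rewrite !inE; apply/andP/imsetP.
  - case=> /andP[vO /eqP v1] /existsP[w /andP[]].
    rewrite inE => /andP[wO /eqP w1] /imsetP[g gG E].
    have E1 := congr1 fst E; have E2 := congr1 snd E; simpl in E1, E2.
    rewrite E1 /flag_act /= in v1; rewrite E2 /flag_act /= in w1.
    exists (simage g L); first by apply/imsetP; exists g => //; rewrite !inE gG v1 w1 !eqxx.
    by rewrite E1 /flag_act /= v1 simageC.
  - case=> X /imsetP[g]; rewrite !inE => /andP[/andP[gG /eqP gs] /eqP gt] -> ->.
    have e : (s, ~: simage g L) = flag_act g v0 by rewrite /flag_act /= gs simageC.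
    rewrite e /= gs eqxx andbT.
    split.
      by apply/imsetP; exists g.
    apply/existsP; exists (flag_act g (t, ~: N)).
    rewrite !inE /= gt eqxx andbT orbit_act //=.
    by apply/imsetP; exists g.
have EC : nbhd Om Psi v0 :&: Omega_at Om t
    = (fun X => (t, ~: X)) @: set_orbit (setstab (pstab (pstab G s) t) L) N.
  apply/setP => w; rewrite !inE; apply/andP/imsetP.
  - case=> /andP[wO /imsetP[g gG E]] /andP[_ /eqP w1].
    have E1 := congr1 fst E; have E2 := congr1 snd E; simpl in E1, E2.
    rewrite /flag_act /= in E1; case: E1 => gs gL.
    rewrite E2 /flag_act /= in w1.
    have gL' : simage g L = L by apply: setC_inj; rewrite -simageC -gL.
    exists (simage g N); first by apply/imsetP; exists g => //; rewrite !inE gG -gs w1 gL' !eqxx.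
    by rewrite E2 /flag_act /= w1 simageC.
  - case=> X /imsetP[g]; rewrite !inE => /andP[/andP[/andP[gG /eqP gs] /eqP gt] /eqP gL] -> ->.
    have e : (t, ~: simage g N) = flag_act g (t, ~: N) by rewrite /flag_act /= gt simageC.
    rewrite e orbit_act //= gt eqxx; split => //; apply/imsetP; exists g => //.
    by rewrite /pair_act /v0; congr pair; rewrite /flag_act /= gs simageC gL.
have trans : forall x, exists2 h, h \in G & h s = x.
  move=> x; case: (eqVneq x s) => [->|xs]; first by exists 1%g; rewrite ?group1 ?perm1.
  have xs2 : s != x by rewrite eq_sym.
  by have [g gG [gs _]] := G2 s x x s xs2 xs; exists g.
have tD : t \in ~: L :\ s.
  by rewrite in_setD1 eq_sym st; move: tLN; rewrite inE => /andP[].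
have feas : forall x, x \in ~: L :\ s -> exists2 k, k \in G &
    [/\ k s = s, simage k (~: L) = ~: L & k t = x].
  move=> x xD; move: f0O f0tr => /imsetP[g0 g0G ->] /= ftr.
  have mem0 : forall y, y \in ~: L :\ s -> g0 y \in simage g0 (~: L) :\ g0 s.
    move=> y; rewrite !in_setD1 simage_mem (inj_eq perm_inj) //.
  have [k] := ftr _ _ (mem0 _ tD) (mem0 _ xD).
  rewrite !inE => /andP[/andP[kG /eqP ks] /eqP kL] kt.
  exists (g0 * k * g0^-1)%g; first by rewrite !groupM ?groupV.
  split; first by rewrite !permM ks permK.
    by rewrite !simageM kL simageK.
  by rewrite !permM kt permK.
split.
- rewrite -cardsT; apply: (@card_by_fst _ _ _ [set: T]) => [p _|x _]; first by rewrite inE.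
  have [h hG <-] := trans x.
  change (#|Omega_at Om (h s)| = #|set_orbit (pstab G s) L|).
  rewrite Omega_at_act // card_imset; last exact: flag_act_inj.
  by rewrite EA card_imset //; apply: injs.
- move=> v /imsetP[g gG ->]; rewrite nbhd_act // card_imset; last exact: flag_act_inj.
  have cD : #|~: L :\ s| = #|T| - #|L| - 1.
    have h1 := cardsC L; have h2 := cardsD1 s (~: L).
    rewrite inE sL in h2; lia.
  rewrite -cD; apply: card_by_fst.
  + move=> p; rewrite inE => /andP[pO /imsetP[k kG E]].
    have E1 := congr1 fst E; have E2 := congr1 snd E; simpl in E1, E2.
    rewrite /flag_act /= in E1; case: E1 => ks kL.
    rewrite E2 /flag_act /= in_setD1 {1}ks (inj_eq perm_inj) eq_sym st /= kL simage_mem.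
    by move: tLN; rewrite inE => /andP[].
  + move=> x xD; have [k kG [ks kL kt]] := feas x xD.
    have ek : flag_act k v0 = v0 by rewrite /flag_act /= ks kL.
    have -> : [set p in nbhd Om Psi v0 | p.1 == x] = nbhd Om Psi v0 :&: Omega_at Om x.
      by apply/setP => p; rewrite !inE; case: (p \in Om) => //=; rewrite andbC.
    have -> : nbhd Om Psi v0 = flag_act k @: nbhd Om Psi v0 by rewrite -nbhd_act // ek.
    rewrite -kt Omega_at_act // -imsetI; last by move=> ? ? _ _; apply: flag_act_inj.
    rewrite card_imset; last exact: flag_act_inj.
    by rewrite EC card_imset //; apply: injs.
- by rewrite EB card_imset //; apply: injs.
- move=> v vS H.
  have : v \in [set v in Omega_at Om s | [exists w in Omega_at Om t, (v, w) \in Psi]].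
    by rewrite inE vS H.
  rewrite EB => /imsetP[X /imsetP[h]]; rewrite !inE => /andP[/andP[hG /eqP hs] /eqP ht] -> ->.
  have ev : (s, ~: simage h L) = flag_act h v0 by rewrite /flag_act /= hs simageC.
  rewrite ev nbhd_act // -{2}ht Omega_at_act // -imsetI; last by move=> ? ? _ _; apply: flag_act_inj.
  rewrite card_imset; last exact: flag_act_inj.
  by rewrite EC card_imset //; apply: injs.
Qed.
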